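(* Let $D$, $C$, $A$ be measurable spaces and $\mathcal{D}$ a probability distribution on $D$. Suppose $\mathrm{enc} : D \to C \times A$ and $\mathrm{dec} : C \times A \to D$ are mutually inverse measurable bijections such that the pushforward $\mathrm{enc}_*\mathcal{D}$ is a product distribution $\mathcal{C} \times \mathcal{A}$ on $C \times A$, and let the discriminative classifier be $\mathrm{cls} = \pi_A \circ \mathrm{enc} : D \to A$ (so $\mathrm{cls}_*\mathcal{D} = \mathcal{A}$ is a balanced attribute of $\mathcal{D}$). Let $\mathrm{put} : D \times A \to D$, $\mathrm{put}(d,a) = \mathrm{dec}(\pi_C(\mathrm{enc}(d)), a)$. Define the stochastic map $\mathrm{cls}^\dagger : A \to D$ sending $a$ to the distribution of $\mathrm{put}(d, a)$ where $d \sim \mathcal{D}$ is drawn independently. Then $\mathrm{cls}^\dagger$ is a Bayesian inversion of $\mathrm{cls}$ with respect to $\mathcal{D}$: the joint distribution of $(x, \mathrm{cls}(x))$ for $x \sim \mathcal{D}$ equals the joint distribution of $(x', a)$ where $a \sim \mathrm{cls}_*\mathcal{D}$ and $x' \sim \mathrm{cls}^\dagger(a)$.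
   Context: A Bayesian inversion of a stochastic map $f : X \to Y$ with respect to a distribution $\mathcal{P}$ on $X$ is a stochastic map $f^\dagger : Y \to X$ such that, in distribution, the pair $(x, f(x))$ with $x \sim \mathcal{P}$ coincides with the pair $(f^\dagger(y), y)$ with $y \sim f_*\mathcal{P}$. Here $\pi_C, \pi_A$ denote the product projections. *)

(* Defs.v *)
From HB Require Import structures.
From mathcomp Require Import all_boot all_order all_algebra.
From mathcomp Require Import all_classical all_reals all_analysis.
Set Implicit Arguments. Unset Strict Implicit. Unset Printing Implicit Defensive.
Import Order.TTheory GRing.Theory Num.Theory.
Local Open Scope classical_set_scope.
Local Open Scope ereal_scope.

Definition cls (D C A : Type) (enc : D -> C * A) : D -> A := fun d => (enc d).2.

Definition put (D C A : Type) (enc : D -> C * A) (dec : C * A -> D) :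
  D -> A -> D := fun d a => dec ((enc d).1, a).

(* cls^dagger(a) = law of put(d, a) with d ~ P: a stochastic map A -> D,
   represented as a family of (probability) measures on D indexed by A. *)
Definition cls_dagger d (D : measurableType d) (C A : Type) (R : realType)
  (P : set D -> \bar R) (enc : D -> C * A) (dec : C * A -> D) :
  A -> set D -> \bar R :=
  fun a => pushforward P (fun x => put enc dec x a).

Definition graph_law dX dY (X : measurableType dX) (Y : measurableType dY)
  (R : realType) (P : set X -> \bar R) (f : X -> Y) : set (X * Y) -> \bar R :=
  pushforward P (fun x => (x, f x)).

Definition inv_joint_law dX dY (X : measurableType dX) (Y : measurableType dY)
  (R : realType) (Q : set Y -> \bar R) (k : Y -> set X -> \bar R) :
  set (X * Y) -> \bar R :=
  fun E => \int[Q]_y k y [set x | E (x, y)].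

Definition is_bayesian_inversion dX dY (X : measurableType dX)
  (Y : measurableType dY) (R : realType) (P : set X -> \bar R) (f : X -> Y)
  (fdag : Y -> set X -> \bar R) : Prop :=
  forall E : set (X * Y), measurable E ->
    graph_law P f E = inv_joint_law (pushforward P f) fdag E.

(* Main.v *)
Require Import Defs.
From HB Require Import structures.
From mathcomp Require Import all_boot all_order all_algebra.
From mathcomp Require Import all_classical all_reals all_analysis.
Local Open Scope classical_set_scope.
Local Open Scope ereal_scope.

Theorem proposition3 (R : realType) (dD dC dA : measure_display)
  (D : measurableType dD) (C : measurableType dC) (A : measurableType dA)
  (P : probability D R) (PC : probability C R) (PA : probability A R)
  (enc : D -> C * A) (dec : C * A -> D) :
  measurable_fun setT enc -> measurable_fun setT dec ->
  cancel enc dec -> cancel dec enc ->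
  (forall E : set (C * A), measurable E -> pushforward P enc E = (PC \x PA) E) ->
  is_bayesian_inversion P (cls enc) (cls_dagger P enc dec).
Proof.
move=> menc mdec ed de hP E mE.
have mcls : measurable_fun setT (cls enc) := measurableT_comp measurable_snd menc.
pose g : C * A -> D * A := fun p => (dec p, p.2).
have mg : measurable_fun setT g := measurable_fun_pair mdec measurable_snd.
have mE' : measurable (g @^-1` E).
  by rewrite -[_ @^-1` _]setTI; exact: mg.
have lhs : graph_law P (cls enc) E = (PC \x PA) (g @^-1` E).
  rewrite -hP //; rewrite /graph_law /pushforward; congr (P _).
  by apply/funext => x /=; rewrite /preimage /g /cls /= ed.
rewrite lhs (product_measure_unique (m' := PC \x^ PA)) //; last first.
  by move=> B1 B2 mB1 mB2; rewrite /= product_measure2E.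
rewrite /inv_joint_law /product_measure2 /=.
pose X : {mfun D >-> A} := HB.pack (cls enc) (isMeasurableFun.Build _ _ _ _ _ mcls).
rewrite (_ : pushforward P (cls enc) = distribution P X) //.
rewrite (eq_measure_integral PA (m1 := distribution P X)); last first.
  move=> B mB _; rewrite /distribution /pushforward /=.
  transitivity (P (enc @^-1` (setT `*` B))).
    by congr (P _); apply/funext => x; rewrite /preimage /cls /=; apply/propext; split => // -[].
  rewrite -/(pushforward P enc _) hP ?measurableX //. rewrite (@product_measure1E _ _ C A R PC PA setT B) // -[RHS]mul1e; congr (_ * _); exact: probability_setT.
  exact: measurableX.
rewrite /product_measure2. apply: eq_integral => a _ /=.
rewrite /cls_dagger /pushforward /=.
have -> : (fun x => put enc dec x a) @^-1` [set x | E (x, a)] =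
          enc @^-1` (ysection (g @^-1` E) a `*` setT).
  apply/funext => x; rewrite /preimage /ysection /put /g /=; apply/propext.
  by rewrite in_setE; split => [h|[]].
rewrite -/(pushforward P enc _) hP; last first.
  by apply: measurableX => //; exact: measurable_ysection.
rewrite product_measure1E //; last exact: measurable_ysection.
rewrite -[LHS]mule1; congr (_ * _); apply/esym; exact: probability_setT.
Qed.
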